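(* Let $H\in\mathbb{R}^{\ell\times\ell}$ be symmetric, $0\ne g_0\in\mathbb{R}^\ell$, $\gamma>0$, and let $(\lambda_*,w_* )$ be a minimizer of pQEPmin. (1) If $g_0^{\top}w_*\ne0$ for all minimizers $(\lambda_*,w_* )$ of pQEPmin, then $\lambda_*<\lambda_{\min}(H)$ and the minimizer of pLGopt is unique. (2) If there exists a minimizer $(\lambda_*,w_* )$ of pQEPmin with $g_0^{\top}w_*=0$, then $\lambda_*=\lambda_{\min}(H)$, and the minimizer of pLGopt is unique if and only if $\|x_*\|=\gamma$, where $x_*=-(H-\lambda_*I)^{\dagger}g_0$.
   Context: pLGopt: minimize $\lambda$ over pairs $(\lambda,y)\in\mathbb{R}\times\mathbb{R}^\ell$ with $(H-\lambda I)y=-g_0$ and $\|y\|=\gamma$. pQEPmin: minimize $\lambda$ over pairs $(\lambda,w)$ with $\lambda\in\mathbb{R}$, $0\ne w\in\mathbb{R}^\ell$ and $(H-\lambda I)^2w=\gamma^{-2}g_0g_0^{\top}w$. $\lambda_{\min}(H)$ is the smallest eigenvalue of $H$; $X^\dagger$ is the Moore–Penrose inverse. *)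

(* Defs.v *)
From HB Require Import structures.
From mathcomp Require Import all_boot all_order all_algebra.
From mathcomp Require Import boolp classical_sets reals.
Set Implicit Arguments. Unset Strict Implicit. Unset Printing Implicit Defensive.
Import Order.TTheory GRing.Theory Num.Theory.
Local Open Scope ring_scope.

Section Defs.
Variables (R : realType) (n : nat).

Definition vnorm (y : 'cV[R]_n) : R := Num.sqrt ((y^T *m y) 0 0).

Definition is_lambda_min (H : 'M[R]_n) (a : R) : Prop :=
  eigenvalue H a /\ forall b, eigenvalue H b -> a <= b.
Definition lambda_min (H : 'M[R]_n) : R := xget 0 [set a | is_lambda_min H a].

Definition is_MP_inverse (A X : 'M[R]_n) : Prop :=
  [/\ A *m X *m A = A, X *m A *m X = X, (A *m X)^T = A *m X & (X *m A)^T = X *m A].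
Definition MP_inverse (A : 'M[R]_n) : 'M[R]_n := xget 0 [set X | is_MP_inverse A X].

Definition LG_feasible (H : 'M[R]_n) (g0 : 'cV[R]_n) (gam : R) (lam : R) (y : 'cV[R]_n) : Prop :=
  (H - lam%:M) *m y = - g0 /\ vnorm y = gam.
Definition LG_minimizer H g0 gam (p : R * 'cV[R]_n) : Prop :=
  LG_feasible H g0 gam p.1 p.2 /\
  forall lam y, LG_feasible H g0 gam lam y -> p.1 <= lam.

Definition QEP_feasible (H : 'M[R]_n) (g0 : 'cV[R]_n) (gam : R) (lam : R) (w : 'cV[R]_n) : Prop :=
  w != 0 /\ (H - lam%:M) *m (H - lam%:M) *m w = gam ^- 2 *: (g0 *m g0^T *m w).
Definition QEP_minimizer H g0 gam (lam : R) (w : 'cV[R]_n) : Prop :=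
  QEP_feasible H g0 gam lam w /\
  forall lam' w', QEP_feasible H g0 gam lam' w' -> lam <= lam'.
End Defs.

(* Main.v *)
Require Import Defs.
From HB Require Import structures.
From mathcomp Require Import all_boot all_order all_algebra.
From mathcomp Require Import boolp classical_sets reals.
From mathcomp Require Import spectral complex polyrcf.
From mathcomp Require Import ring lra.
Import Order.TTheory GRing.Theory Num.Theory.
Local Open Scope ring_scope.

Module Aux.
Set Implicit Arguments. Unset Strict Implicit. Unset Printing Implicit Defensive.

Section Spec.
Variable R : rcfType.

Lemma cnorm2E n (x : 'cV[R]_n) : (x^T *m x) 0 0 = \sum_i x i 0 ^+ 2.
Proof. by rewrite mxE; apply: eq_bigr => k _; rewrite mxE expr2. Qed.

Lemma cnorm2_ge0 n (x : 'cV[R]_n) : 0 <= (x^T *m x) 0 0.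
Proof. by rewrite cnorm2E sumr_ge0 // => i _; rewrite sqr_ge0. Qed.

Lemma cnorm2_eq0 n (x : 'cV[R]_n) : (x^T *m x) 0 0 = 0 -> x = 0.
Proof.
rewrite cnorm2E => /psumr_eq0P H0; apply/matrixP => i j.
rewrite ord1 !mxE; apply/eqP; rewrite -sqrf_eq0; apply/eqP; apply: H0 => // k _.
exact: sqr_ge0.
Qed.

Lemma entB m n (A B : 'M[R]_(m, n)) i j : (A - B) i j = A i j - B i j.
Proof. by rewrite !mxE. Qed.
Lemma entD m n (A B : 'M[R]_(m, n)) i j : (A + B) i j = A i j + B i j.
Proof. by rewrite !mxE. Qed.
Lemma entZ m n a (A : 'M[R]_(m, n)) i j : (a *: A) i j = a * A i j.
Proof. by rewrite !mxE. Qed.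
Lemma entN m n (A : 'M[R]_(m, n)) i j : (- A) i j = - A i j.
Proof. by rewrite !mxE. Qed.

Lemma trZ m n a (A : 'M[R]_(m, n)) : (a *: A)^T = a *: A^T.
Proof. by apply/matrixP => i j; rewrite !mxE. Qed.
Lemma trB m n (A B : 'M[R]_(m, n)) : (A - B)^T = A^T - B^T.
Proof. by apply/matrixP => i j; rewrite !mxE. Qed.
Lemma trD m n (A B : 'M[R]_(m, n)) : (A + B)^T = A^T + B^T.
Proof. by apply/matrixP => i j; rewrite !mxE. Qed.
Lemma trN m n (A : 'M[R]_(m, n)) : (- A)^T = - A^T.
Proof. by apply/matrixP => i j; rewrite !mxE. Qed.

Lemma householder n (x : 'cV[R]_n.+1) : (x^T *m x) 0 0 = 1 ->
  exists P : 'M_n.+1, [/\ P^T = P, P *m P = 1%:M & P *m delta_mx 0 0 = x].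
Proof.
move=> x1.
pose e : 'cV[R]_n.+1 := delta_mx 0 0.
pose u := e - x; pose t := (u^T *m u) 0 0; pose c := 2 / t.
exists (1%:M - c *: (u *m u^T)); split.
- by rewrite linearB /= trmx1 linearZ /= trmx_mul trmxK.
- have uu : u^T *m u = t%:M by rewrite [LHS]mx11_scalar.
  rewrite mulmxBl !mulmxBr !mul1mx !mulmx1 -!scalemxAl -!scalemxAr mulmxA -(mulmxA u) uu.
  rewrite mul_mx_scalar -!scalemxAl scalerA.
  rewrite scalerA.
  have -> : c * (c * t) = c + c.
    rewrite /c; have [->|t0] := eqVneq t 0; first by rewrite invr0 !mulr0 addr0.
    by field.
  rewrite scalerDl; set U := c *: _.
  have -> : U - (U + U) = - U by rewrite opprD addrA subrr add0r.
  by rewrite opprK subrK.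
- have ex : (e^T *m x) 0 0 = x 0 0.
    by rewrite /e trmx_delta -rowE mxE.
  have xe : (x^T *m e) 0 0 = x 0 0.
    by rewrite /e -colE !mxE.
  have ee : (e^T *m e) 0 0 = 1.
    by rewrite /e trmx_delta mul_delta_mx mxE !eqxx.
  have tE : t = 2 * (1 - x 0 0).
    have trB : u^T = e^T - x^T by rewrite /u linearB.
    rewrite /t trB mulmxBl /u !mulmxBr !entB ex xe ee x1; ring.
  have ue : u^T *m e = (1 - x 0 0)%:M.
    have trB : u^T = e^T - x^T by rewrite /u linearB.
    by rewrite [LHS]mx11_scalar trB mulmxBl entB xe ee.
  rewrite mulmxBl mul1mx -scalemxAl -mulmxA ue mul_mx_scalar scalerA.
  have [t0|t0] := eqVneq t 0.
    have u0 : u = 0 by apply: cnorm2_eq0.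
    by move/eqP: u0; rewrite subr_eq0 => /eqP <-; rewrite /c t0 invr0 mulr0 mul0r scale0r subr0.
  have -> : c * (1 - x 0 0) = 1.
    rewrite /c tE; field; apply: contra t0; rewrite tE => /eqP ->; by rewrite mulr0.
  by rewrite scale1r /u opprB addrC subrK.
Qed.
Lemma sqr_sum_eq0 n (v : 'rV[R]_n) : (v *m v^T) 0 0 = \sum_k v 0 k ^+ 2.
Proof. by rewrite mxE; apply: eq_bigr => k _; rewrite mxE expr2. Qed.

Lemma Re_mulrC (x : R[i]) (r : R) : @complex.Re R (x * (@Complex R r 0)) = @complex.Re R x * r.
Proof. by case: x => a b /=; rewrite mulr0 subr0. Qed.
Lemma Im_mulrC (x : R[i]) (r : R) : @complex.Im R (x * (@Complex R r 0)) = @complex.Im R x * r.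
Proof. by case: x => a b /=; rewrite mulr0 add0r. Qed.
Lemma Re_mul (x y : R[i]) : @complex.Re R (x * y) = complex.Re x * complex.Re y - complex.Im x * complex.Im y.
Proof. by case: x => a b; case: y. Qed.
Lemma Im_mul (x y : R[i]) : @complex.Im R (x * y) = complex.Re x * complex.Im y + complex.Im x * complex.Re y.
Proof. by case: x => a b; case: y. Qed.

Lemma aux_lin (a b X Y W : R) : a*W + b * - Y = b*X + a*W -> b*X + b*Y = 0.
Proof. move=> H0; have -> : b * X = b * X + a * W - (a * W + b * - Y) - b * Y by ring.
by rewrite -H0; ring. Qed.

Lemma sym_real_eig m (S : 'M[R]_m.+1) : S^T = S ->
  exists a (v : 'rV[R]_m.+1), v != 0 /\ v *m S = a *: v.
Proof.
move=> SS.
pose SC := map_mx (fun r : R => (@Complex R r 0) : R[i]) S.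
have [z /eigenvalueP [w wS w0]] := @eigenvalue_closed (R[i]) _ SC (ltn0Sn m).
pose wr := map_mx (@complex.Re R) w; pose wi := map_mx (@complex.Im R) w.
pose a := complex.Re z; pose b := complex.Im z.
have Er : wr *m S = a *: wr - b *: wi.
  apply/rowP => j; move/rowP: (wS) => /(_ j) /(congr1 (@complex.Re R)).
  rewrite !mxE Re_mul (@raddf_sum _ _ (@complex.Re R)) => E.
  rewrite -/a -/b in E; rewrite -E; apply: eq_bigr => k _.
  by rewrite /wr /SC !mxE; case: (w 0 k) => x y /=; rewrite mulr0 subr0.
have Ei : wi *m S = b *: wr + a *: wi.
  apply/rowP => j; move/rowP: (wS) => /(_ j) /(congr1 (@complex.Im R)).
  rewrite !mxE Im_mul (@raddf_sum _ _ (@complex.Im R)) => E.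
  rewrite -/a -/b in E; rewrite addrC -E; apply: eq_bigr => k _.
  by rewrite /wi /SC !mxE; case: (w 0 k) => x y /=; rewrite mulr0 add0r.
have key : wr *m S *m wi^T = wr *m (wi *m S)^T.
  by rewrite trmx_mul SS mulmxA.
rewrite Er Ei linearD !linearZ /= in key.
rewrite mulmxDl mulmxDr -!scalemxAl -!scalemxAr mulNmx in key.
have key2 : b * ((wr *m wr^T) 0 0 + (wi *m wi^T) 0 0) = 0.
  move/matrixP: key => /(_ 0 0); rewrite !mxE => H0.
  by rewrite mulrDr; apply: aux_lin H0.
have pos : (wr *m wr^T) 0 0 + (wi *m wi^T) 0 0 != 0.
  rewrite !sqr_sum_eq0 -big_split /=.
  apply/eqP => /psumr_eq0P H0; apply/negP: w0; rewrite negbK; apply/eqP/rowP => k.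
  have := H0 (fun i _ => addr_ge0 (sqr_ge0 _) (sqr_ge0 _)) k isT => /eqP.
  rewrite paddr_eq0 ?sqr_ge0 // !sqrf_eq0 /wr /wi !mxE => /andP[/eqP r0 /eqP i0].
  by move: r0 i0; case: (w 0 k) => x y /= -> ->.
have b0 : b = 0 by apply/eqP; move: key2 => /eqP; rewrite mulf_eq0 (negPf pos) orbF.
rewrite b0 scale0r subr0 in Er; rewrite b0 scale0r add0r in Ei.
have [wr0|wrn0] := eqVneq wr 0.
  exists a, wi; split => //; apply: contra w0 => /eqP wi0.
  apply/eqP/rowP => k; move/rowP: wr0 => /(_ k); move/rowP: wi0 => /(_ k).
  by rewrite /wr /wi !mxE; case: (w 0 k) => x y /= -> ->.
by exists a, wr.
Qed.

Lemma spectral_real n (S : 'M[R]_n) : S^T = S ->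
  exists (Q : 'M[R]_n) (d : 'rV[R]_n), Q^T *m Q = 1%:M /\ S = Q *m diag_mx d *m Q^T.
Proof.
elim: n S => [|m IH] S SS.
  exists 1%:M, 0; split; first by rewrite trmx1 mul1mx.
  by apply/matrixP => -[].
have [a [v [v0 vS]]] := sym_real_eig SS.
pose nv := (v^T^T *m v^T) 0 0.
have nv0 : 0 < nv.
  rewrite lt_def cnorm2_ge0 andbT; apply: contra v0 => /eqP /cnorm2_eq0 /eqP.
  by rewrite -trmx0 (can_eq (@trmxK _ _ _)).
pose x := (Num.sqrt nv)^-1 *: v^T.
have x1 : (x^T *m x) 0 0 = 1.
  rewrite /x trZ -scalemxAl -scalemxAr !entZ -/nv mulrA -invfM -expr2 sqr_sqrtr.
    by rewrite mulVf // gt_eqF.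
  exact: ltW.
have Sx : S *m x = a *: x.
  by rewrite /x -scalemxAr -{1}SS -trmx_mul vS linearZ /= scalerA mulrC -scalerA.
have [P [PT PP Pe]] := householder x1.
pose e : 'cV[R]_m.+1 := delta_mx 0 0.
pose S' := P *m S *m P.
have S'e : S' *m e = a *: e.
  have Px : P *m x = e by rewrite -Pe mulmxA PP mul1mx.
  by rewrite /S' -mulmxA Pe -mulmxA Sx -scalemxAr Px.
have S'T : S'^T = S' by rewrite /S' !trmx_mul PT SS mulmxA.
have S'i0 i : S' i 0 = a * (i == 0)%:R.
  move/matrixP: S'e => /(_ i 0).
  by rewrite -colE !mxE andbT => ->.
have S'def : S' = P *m S *m P by [].
clearbody S'.
pose S2 := drsubmx (S' : 'M_(1 + m)).
have S'B : (S' : 'M_(1 + m)) = block_mx (const_mx a) 0 0 S2.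
  rewrite -[LHS](@submxK _ 1 m 1 m); congr block_mx.
  - apply/matrixP => i j; rewrite !ord1 !mxE.
    have -> : lshift m (0 : 'I_1) = 0 by apply: val_inj.
    by rewrite S'i0 eqxx mulr1.
  - apply/matrixP => i j; rewrite !ord1 !mxE -S'T mxE.
    have -> : lshift m (0 : 'I_1) = 0 by apply: val_inj.
    by rewrite S'i0 mulr0.
  - apply/matrixP => i j; rewrite !ord1 !mxE.
    have -> : lshift m (0 : 'I_1) = 0 by apply: val_inj.
    by rewrite S'i0 mulr0.
have S2T : S2^T = S2 by rewrite /S2 trmx_drsub S'T.
have [Q2 [d2 [Q2Q S2E]]] := IH S2 S2T.
pose B : 'M[R]_(1 + m) := block_mx 1%:M 0 0 Q2.
exists (P *m B), (row_mx (const_mx a : 'rV_1) d2 : 'rV_(1 + m)); split.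
  rewrite trmx_mul mulmxA -(mulmxA B^T) PT PP mulmx1 /B tr_block_mx !trmx0 trmx1.
  rewrite (@mulmx_block _ 1 m 1 m 1 m) ?mulmx0 ?mul0mx ?mulmx1 ?mul1mx ?addr0 ?add0r Q2Q.
  by rewrite -scalar_mx_block.
rewrite (@diag_mx_row _ m 1) trmx_mul PT /B (@tr_block_mx _ 1 m 1 m) !trmx0 trmx1 !mulmxA.
rewrite -(mulmxA P) (@mulmx_block _ 1 m 1 m 1 m) ?mulmx0 ?mul0mx ?mulmx1 ?mul1mx ?addr0 ?add0r.
rewrite -(mulmxA P) (@mulmx_block _ 1 m 1 m 1 m) ?mulmx0 ?mul0mx ?mulmx1 ?addr0 ?add0r.
have D1 : diag_mx (const_mx a : 'rV_1) = const_mx a by apply/matrixP => i j; rewrite !ord1 !mxE.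
rewrite -S2E D1 -S'B S'def.
by rewrite !mulmxA PP mul1mx -!mulmxA PP mulmx1.
Qed.
End Spec.

Section Basic.
Variable R : realType.
Variable n : nat.
Variables (H : 'M[R]_n) (g0 : 'cV[R]_n) (gam : R).
Hypothesis HT : H^T = H.
Hypothesis gam0 : 0 < gam.

Lemma vnormP (y : 'cV[R]_n) : vnorm y = gam <-> (y^T *m y) 0 0 = gam ^+ 2.
Proof.
rewrite /vnorm; split.
  move=> E; have [lt0|ge0] := ltP ((y^T *m y) 0 0) 0.
    by move: E; rewrite ltr0_sqrtr // => E; move: gam0; rewrite -E ltxx.
  by rewrite -E sqr_sqrtr.
by move=> ->; rewrite sqrtr_sqr gtr0_norm.
Qed.

Lemma trA lam : (H - lam%:M)^T = H - lam%:M.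
Proof. by rewrite trB HT tr_scalar_mx. Qed.

Lemma eig_col lam (z : 'cV[R]_n) : z != 0 -> H *m z = lam *: z -> eigenvalue H lam.
Proof.
move=> z0 Hz; apply/eigenvalueP; exists z^T.
  by rewrite -{1}HT -trmx_mul Hz trZ.
by apply: contra z0 => /eqP z0; rewrite -[z]trmxK z0 trmx0.
Qed.

Lemma col_eig lam : eigenvalue H lam -> exists z : 'cV[R]_n, z != 0 /\ H *m z = lam *: z.
Proof.
move=> /eigenvalueP [v vH v0]; exists v^T; split.
  by apply: contra v0 => /eqP v0; rewrite -[v]trmxK v0 trmx0.
by rewrite -{1}HT -trmx_mul vH trZ.
Qed.

Lemma kerA lam (z : 'cV[R]_n) : ((H - lam%:M) *m z = 0) <-> (H *m z = lam *: z).
Proof.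
rewrite mulmxBl mul_scalar_mx; split; first by move/eqP; rewrite subr_eq0 => /eqP.
by move=> ->; rewrite subrr.
Qed.

Lemma mx11E (A : 'M[R]_1) : A = (A 0 0)%:M.
Proof. exact: mx11_scalar. Qed.

Lemma QEP_s0 lam w : QEP_feasible H g0 gam lam w -> (g0^T *m w) 0 0 = 0 ->
  H *m w = lam *: w.
Proof.
move=> [w0 E] s0; apply/kerA; set A := H - lam%:M in E *.
have gw : g0^T *m w = 0 by apply/matrixP => i j; rewrite !ord1 s0 mxE.
rewrite -(mulmxA g0) gw mulmx0 scaler0 in E.
apply: cnorm2_eq0.
by rewrite trmx_mul trA -mulmxA (mulmxA A) E mulmx0 mxE.
Qed.

Lemma QEP_LG lam w : QEP_feasible H g0 gam lam w -> (g0^T *m w) 0 0 != 0 ->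
  exists y, LG_feasible H g0 gam lam y.
Proof.
move=> [w0 E] s0; set s := (g0^T *m w) 0 0 in s0.
set A := H - lam%:M in E *.
have gw : g0^T *m w = s%:M by rewrite [LHS]mx11E.
have wg : w^T *m g0 = s%:M by rewrite -[w^T *m g0]trmxK trmx_mul trmxK gw tr_scalar_mx.
rewrite -(mulmxA g0) gw mul_mx_scalar scalerA in E.
have g2 : gam != 0 by rewrite gt_eqF.
exists ((- gam^+2 / s) *: (A *m w)); split.
  rewrite -scalemxAr mulmxA E scalerA.
  have -> : (- gam ^+ 2 / s) * (gam ^- 2 * s) = -1 by field; rewrite s0 g2.
  by rewrite scaleN1r.
apply/vnormP; rewrite trZ -scalemxAl -scalemxAr !entZ trmx_mul trA -mulmxA (mulmxA A) E.
rewrite -scalemxAr entZ wg mxE eqxx mulr1n.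
by field; rewrite s0 g2.
Qed.

Lemma LG_QEP lam y : LG_feasible H g0 gam lam y -> exists w, QEP_feasible H g0 gam lam w.
Proof.
move=> [Ay /vnormP yy]; set A := H - lam%:M in Ay *.
have g2 : gam != 0 by rewrite gt_eqF.
have y0 : y != 0.
  apply/eqP => y0'; move: yy; rewrite y0' trmx0 mul0mx mxE => /eqP.
  by rewrite eq_sym sqrf_eq0 (negPf g2).
have gT : g0^T = - (y^T *m A) by rewrite -[g0]opprK -Ay trN trmx_mul trA.
case: (boolP (eigenvalue H lam)) => [/col_eig [z [z0 /kerA Az]] | ne].
  exists z; split => //.
  have gz : g0^T *m z = 0 by rewrite gT mulNmx -mulmxA Az mulmx0 oppr0.
  by rewrite -mulmxA Az mulmx0 -(mulmxA g0) gz mulmx0 scaler0.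
have Au : A \in unitmx by rewrite -row_free_unit -kermx_eq0; move: ne; rewrite /eigenvalue negbK.
exists (invmx A *m y); split.
  by apply: contra y0 => /eqP w0; rewrite -(mulKVmx Au y) w0 mulmx0.
have gw : g0^T *m (invmx A *m y) = - (gam ^+ 2)%:M.
  by rewrite gT mulNmx -mulmxA (mulKVmx Au) [y^T *m y]mx11E yy.
rewrite -mulmxA (mulKVmx Au) Ay -(mulmxA g0) gw mulmxN mul_mx_scalar scalerN scalerA.
by rewrite mulVf ?sqrf_eq0 // scale1r.
Qed.
End Basic.

Section IVT.
Variable R : rcfType.
Variable n : nat.
Variables (c : 'cV[R]_n) (d : 'rV[R]_n).

Definition phi (x : R) := \sum_i c i 0 ^+ 2 / (d 0 i - x) ^+ 2.

Definition Jc := [pred i | c i 0 != 0].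

Definition secp (g2 : R) : {poly R} :=
  \sum_(i | Jc i) (c i 0 ^+ 2)%:P * \prod_(j | Jc j && (j != i)) ((d 0 j)%:P - 'X) ^+ 2
  - g2%:P * \prod_(j | Jc j) ((d 0 j)%:P - 'X) ^+ 2.

Lemma phiJ x : phi x = \sum_(i | Jc i) c i 0 ^+ 2 / (d 0 i - x) ^+ 2.
Proof.
rewrite /phi (bigID Jc) /= [X in _ + X]big1 ?addr0 // => i.
by rewrite /Jc /= negbK => /eqP ->; rewrite expr0n mul0r.
Qed.

Lemma secpE g2 x : (forall j, Jc j -> d 0 j - x != 0) ->
  (secp g2).[x] = (phi x - g2) * \prod_(j | Jc j) (d 0 j - x) ^+ 2.
Proof.
move=> nz; rewrite /secp hornerD hornerN horner_sum hornerM hornerC.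
rewrite horner_prod mulrBl phiJ mulr_suml; congr (_ - _); last first.
  by congr (_ * _); apply: eq_bigr => j _; rewrite !hornerE.
apply: eq_bigr => i Ji; rewrite hornerM hornerC horner_prod.
rewrite (bigD1 i Ji) /= mulrA divfK; last by rewrite expf_neq0 // nz.
by congr (_ * _); apply: eq_bigr => j _; rewrite !hornerE.
Qed.

Lemma ivt_phi (g2 lo hi : R) :
  lo <= hi -> (forall i, c i 0 != 0 -> hi < d 0 i) ->
  phi lo < g2 -> g2 <= phi hi -> exists2 x, lo <= x <= hi & phi x = g2.
Proof.
move=> lohi Jhi plo phi_.
have nz x : x <= hi -> forall j, Jc j -> d 0 j - x != 0.
  move=> xhi j Jj; rewrite subr_eq0 gt_eqF //; exact: (le_lt_trans xhi (Jhi j Jj)).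
have pos x : x <= hi -> 0 < \prod_(j | Jc j) (d 0 j - x) ^+ 2.
  move=> xhi; apply: prodr_gt0 => j Jj; rewrite exprn_gt0 // subr_gt0.
  exact: (le_lt_trans xhi (Jhi j Jj)).
have H1 : (secp g2).[lo] * (secp g2).[hi] <= 0.
  rewrite (secpE _ (nz lo lohi)) (secpE _ (nz hi (lexx hi))).
  rewrite mulrACA; apply: mulr_le0_ge0; last by rewrite mulr_ge0 // ltW // pos.

  by rewrite mulr_le0_ge0 // ?subr_ge0 // ltW // subr_lt0.
have [x xin rx] := polyrcf.poly_ivt lohi H1.
move: xin; rewrite in_itv /= => /andP[lox xhi].
exists x; first by rewrite lox.
move/rootP: rx; rewrite (secpE _ (nz x xhi)) => /eqP; rewrite mulf_eq0 (gt_eqF (pos x xhi)) orbF subr_eq0.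
by move/eqP.
Qed.

Lemma term_le (a t K : R) : 0 < K -> K <= t -> a ^+ 2 / t ^+ 2 <= a ^+ 2 / K ^+ 2.
Proof.
move=> K0 Kt; apply: ler_wpM2l; first exact: sqr_ge0.
have t0 : 0 < t by apply: lt_le_trans Kt.
rewrite lef_pV2 ?posrE ?exprn_gt0 //.
by rewrite ler_pXn2r // ?nnegrE ltW.
Qed.

Lemma phi_lo (m g : R) : 0 < g -> (forall i, m <= d 0 i) ->
  phi (m - (\sum_i c i 0 ^+ 2 + 1) / g) < g ^+ 2.
Proof.
move=> g0 md; set S := \sum_i c i 0 ^+ 2.
have S0 : 0 <= S by apply: sumr_ge0 => i _; apply: sqr_ge0.
set K := (S + 1) / g.
have K0 : 0 < K by rewrite divr_gt0 // ltr_wpDl.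
apply: (le_lt_trans (y := S / K ^+ 2)).
  rewrite /phi /S mulr_suml; apply: ler_sum => i _; apply: term_le => //.
  have := md i; lra.
rewrite /K expr_div_n invf_div mulrA ltr_pdivrMr ?exprn_gt0 ?ltr_wpDl //.
have g2 : 0 < g ^+ 2 by rewrite exprn_gt0.
nra.
Qed.

Lemma phi_hi_a (m g : R) i1 : 0 < g -> d 0 i1 = m -> c i1 0 != 0 ->
  g ^+ 2 <= phi (m - `|c i1 0| / g).
Proof.
move=> g0 di ci; rewrite /phi (bigD1 i1) //=.
have -> : c i1 0 ^+ 2 / (d 0 i1 - (m - `|c i1 0| / g)) ^+ 2 = g ^+ 2.
  rewrite di opprB addrC subrK expr_div_n real_normK ?num_real //.
  by rewrite invf_div mulrC divfK // sqrf_eq0.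
by rewrite lerDl; apply: sumr_ge0 => j _; rewrite divr_ge0 ?sqr_ge0.
Qed.

Lemma norm_le_S (m g : R) i1 : 0 < g -> `|c i1 0| / g <= (\sum_i c i 0 ^+ 2 + 1) / g.
Proof.
move=> g0; rewrite ler_pM2r ?invr_gt0 //.
have : c i1 0 ^+ 2 <= \sum_i c i 0 ^+ 2.
  rewrite (bigD1 i1) //= lerDl; apply: sumr_ge0 => j _; exact: sqr_ge0.
rewrite -real_normK ?num_real //.
have := normr_ge0 (c i1 0); nra.
Qed.
End IVT.

Section MP.
Variable R : realType.
Variable n : nat.

Lemma MP_range (A P : 'M[R]_n) (g : 'cV[R]_n) : A^T = A -> is_MP_inverse A P ->
  (forall z : 'cV[R]_n, A *m z = 0 -> (g^T *m z) 0 0 = 0) -> A *m (P *m g) = g.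
Proof.
move=> AT [h1 h2 h3 h4] gk.
pose E := 1%:M - A *m P.
have ET : E^T = E by rewrite /E trB trmx1 h3.
have EA : E *m A = 0 by rewrite /E mulmxBl mul1mx h1 subrr.
have AE : A *m E = 0 by rewrite -[A *m E]trmxK trmx_mul ET AT EA trmx0.
have APE : A *m P *m E = 0.
  by rewrite -[LHS]trmxK trmx_mul h3 ET mulmxA EA mul0mx trmx0.
have EE : E *m E = E by rewrite {1}/E mulmxBl mul1mx APE subr0.
have k0 : E *m g = 0.
  apply: cnorm2_eq0; rewrite trmx_mul ET -mulmxA (mulmxA E) EE.
  by apply: gk; rewrite mulmxA AE mul0mx.
by move/eqP: k0; rewrite /E mulmxBl mul1mx subr_eq0 mulmxA => /eqP <-.
Qed.

Lemma MP_perp (A P : 'M[R]_n) (g z : 'cV[R]_n) : is_MP_inverse A P ->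
  A *m z = 0 -> (P *m g)^T *m z = 0.
Proof.
move=> [h1 h2 h3 h4] Az.
have PT : P^T = P^T *m (P *m A) by rewrite -{1}h2 trmx_mul h4.
by rewrite trmx_mul -mulmxA PT -!mulmxA Az !mulmx0.
Qed.
End MP.

Section Spec2.
Variable R : realType.
Variable n : nat.
Variables (H : 'M[R]_n) (g0 : 'cV[R]_n) (gam : R) (Q : 'M[R]_n) (d : 'rV[R]_n).
Hypothesis HT : H^T = H.
Hypothesis gam0 : 0 < gam.
Hypothesis QQ : Q^T *m Q = 1%:M.
Hypothesis HQ : H = Q *m diag_mx d *m Q^T.

Let QQt : Q *m Q^T = 1%:M := mulmx1C QQ.
Local Notation c := (Q^T *m g0).

Lemma QtQ (v : 'cV[R]_n) : Q^T *m (Q *m v) = v.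
Proof. by rewrite mulmxA QQ mul1mx. Qed.
Lemma QQtv (v : 'cV[R]_n) : Q *m (Q^T *m v) = v.
Proof. by rewrite mulmxA QQt mul1mx. Qed.

Lemma Aq lam (u : 'cV[R]_n) :
  (H - lam%:M) *m (Q *m u) = Q *m ((diag_mx d - lam%:M) *m u).
Proof.
rewrite HQ !mulmxBl -!mulmxA QtQ mulmxBr !mul_scalar_mx -scalemxAr.
by rewrite !mulmxA.
Qed.

Lemma diagBcol lam (u : 'cV[R]_n) i :
  ((diag_mx d - lam%:M) *m u) i 0 = (d 0 i - lam) * u i 0.
Proof. by rewrite mulmxBl mul_diag_mx mul_scalar_mx !mxE mulrBl. Qed.

Lemma normQ (u : 'cV[R]_n) : ((Q *m u)^T *m (Q *m u)) 0 0 = (u^T *m u) 0 0.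
Proof. by rewrite trmx_mul -mulmxA QtQ. Qed.

Lemma Hcol i : H *m col i Q = d 0 i *: col i Q.
Proof.
have De : diag_mx d *m delta_mx i 0 = d 0 i *: delta_mx i (0 : 'I_1).
  apply/matrixP => a b; rewrite mul_diag_mx !mxE.
  by case E: (a == i); [move/eqP: E => -> | rewrite /= !mulr0].
by rewrite HQ colE -!mulmxA QtQ De -scalemxAr.
Qed.

Lemma col_neq0 i : col i Q != 0.
Proof.
apply/eqP => c0; have := QtQ (delta_mx i 0); rewrite -colE c0 mulmx0.
by move/matrixP => /(_ i 0); rewrite !mxE !eqxx /= => /eqP; rewrite eq_sym oner_eq0.
Qed.

Lemma vcol (v : 'cV[R]_n) i : (v^T *m col i Q) 0 0 = (Q^T *m v) i 0.
Proof. by rewrite !mxE; apply: eq_bigr => k _; rewrite !mxE mulrC. Qed.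
Lemma gcol i : (g0^T *m col i Q) 0 0 = c i 0.
Proof. exact: vcol. Qed.

Lemma gz (z : 'cV[R]_n) : (g0^T *m z) 0 0 = \sum_i c i 0 * (Q^T *m z) i 0.
Proof.
rewrite -{1}(QQtv z) mulmxA (_ : g0^T *m Q = c^T); last by rewrite trmx_mul trmxK.
rewrite mxE.
by apply: eq_bigr => i _; rewrite mxE.
Qed.

Lemma eig_coords b (z : 'cV[R]_n) : H *m z = b *: z -> forall i, (Q^T *m z) i 0 != 0 -> d 0 i = b.
Proof.
move=> /kerA Hz i ui.
have : (H - b%:M) *m (Q *m (Q^T *m z)) = 0 by rewrite QQtv.
rewrite Aq => /(congr1 (mulmx Q^T)); rewrite QtQ mulmx0 => /matrixP /(_ i 0).
rewrite [in X in _ = X]mxE diagBcol => /eqP; rewrite mulf_eq0 (negPf ui) orbF subr_eq0.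
by move/eqP.
Qed.

Lemma eig_in b : eigenvalue H b -> exists i, d 0 i = b.
Proof.
move=> /(col_eig HT) [z [z0 Hz]].
case: (pickP (fun i => (Q^T *m z) i 0 != 0)) => [i ui | none].
  by exists i; apply: eig_coords Hz i ui.
move: z0; rewrite -(QQtv z).
have -> : Q^T *m z = 0.
  apply/matrixP => i j; rewrite ord1 [in X in _ = X]mxE.
  by move: (none i) => /= /negbFE/eqP.
by rewrite mulmx0 eqxx.
Qed.

Variable i0 : 'I_n.
Hypothesis i0min : forall i, d 0 i0 <= d 0 i.
Local Notation m := (d 0 i0).

Lemma eig_ge b : eigenvalue H b -> m <= b.
Proof. by case/eig_in => i <-; apply: i0min. Qed.

Lemma eig_m : eigenvalue H m.
Proof. exact: (eig_col HT (col_neq0 i0) (Hcol i0)). Qed.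

Lemma lminE : lambda_min H = m.
Proof.
rewrite /lambda_min; apply: xget_unique; first by split; [exact: eig_m | exact: eig_ge].
by move=> y [ey ymin]; apply/le_anti; rewrite (eig_ge ey) ymin // eig_m.
Qed.

Lemma LG_phi lam : lam < m -> phi c d lam = gam ^+ 2 -> exists y, LG_feasible H g0 gam lam y.
Proof.
move=> lm ph.
have nz i : d 0 i - lam != 0 by rewrite subr_eq0 gt_eqF // (lt_le_trans lm (i0min i)).
pose u : 'cV[R]_n := \col_i (- c i 0 / (d 0 i - lam)).
exists (Q *m u); split.
  rewrite Aq (_ : _ *m u = - c) ?mulmxN ?QQtv //.
  apply/matrixP => i j; rewrite ord1 diagBcol !mxE.
  by field; rewrite nz.
apply/(vnormP gam0); rewrite normQ cnorm2E -ph; apply: eq_bigr => i _.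
by rewrite /u [X in X ^+ 2 = _]mxE mulNr sqrrN expr_div_n.
Qed.

Lemma sol_a (z : 'cV[R]_n) : H *m z = m *: z -> (g0^T *m z) 0 0 != 0 ->
  exists lam, lam < m /\ exists y, LG_feasible H g0 gam lam y.
Proof.
move=> Hz gz0.
have [i1 [di1 ci1]] : exists i1, d 0 i1 = m /\ c i1 0 != 0.
  move: gz0; rewrite gz.
  case: (pickP (fun i => c i 0 * (Q^T *m z) i 0 != 0)) => [i /= ne | none].
    exists i; split; last by apply: contra ne => /eqP ->; rewrite mul0r.
    by apply: (eig_coords Hz); apply: contra ne => /eqP ->; rewrite mulr0.
  by rewrite big1 ?eqxx // => i _; move: (none i) => /= /negbFE /eqP.
have ca : 0 < `|c i1 0| / gam by rewrite divr_gt0 // normr_gt0.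
have lh : m - (\sum_i c i 0 ^+ 2 + 1) / gam <= m - `|c i1 0| / gam.
  by have := norm_le_S c m i1 gam0; lra.
have hd : forall i, c i 0 != 0 -> m - `|c i1 0| / gam < d 0 i.
  by move=> i _; have := i0min i; lra.
have [x /andP [lox xhi] px] := ivt_phi lh hd (phi_lo c gam0 i0min) (phi_hi_a gam0 di1 ci1).
exists x; split; first by lra.
by apply: LG_phi => //; lra.
Qed.

Lemma sol_b : (forall z : 'cV[R]_n, H *m z = m *: z -> (g0^T *m z) 0 0 = 0) ->
  gam ^+ 2 < phi c d m -> exists lam, lam < m /\ exists y, LG_feasible H g0 gam lam y.
Proof.
move=> perp big.
have ci i : c i 0 != 0 -> m < d 0 i.
  move=> ci; rewrite lt_def i0min andbT; apply: contra ci => /eqP mi.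
  by rewrite -gcol perp // Hcol mi.
have S0 : 0 <= (\sum_i c i 0 ^+ 2 + 1) / gam.
  apply: divr_ge0; last exact: ltW.
  by apply: addr_ge0 => //; apply: sumr_ge0 => i _; apply: sqr_ge0.
have lh : m - (\sum_i c i 0 ^+ 2 + 1) / gam <= m by lra.
have [x /andP [lox xhi] px] := ivt_phi lh ci (phi_lo c gam0 i0min) (ltW big).
have xm : x < m.
  rewrite lt_def xhi andbT; apply/eqP => xm; move: big; rewrite xm px ltxx.
  by [].
by exists x; split; last apply: LG_phi.
Qed.

Lemma Qd_mul (a b : 'rV[R]_n) :
  (Q *m diag_mx a *m Q^T) *m (Q *m diag_mx b *m Q^T) =
  Q *m diag_mx (\row_j (a 0 j * b 0 j)) *m Q^T.
Proof. by rewrite -!mulmxA (mulmxA Q^T) QQ mul1mx (mulmxA (diag_mx a)) mulmx_diag. Qed.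

Lemma Qd_tr (a : 'rV[R]_n) : (Q *m diag_mx a *m Q^T)^T = Q *m diag_mx a *m Q^T.
Proof. by rewrite !trmx_mul trmxK tr_diag_mx mulmxA. Qed.

Lemma A_Qd lam : H - lam%:M = Q *m diag_mx (\row_j (d 0 j - lam)) *m Q^T.
Proof.
have -> : diag_mx (\row_j (d 0 j - lam)) = diag_mx d - lam%:M.
  by apply/matrixP => i j; rewrite !mxE mulrnBl.
by rewrite mulmxBr mulmxBl -HQ mul_mx_scalar -scalemxAl QQt scalemx1.
Qed.

Lemma MP_ex lam : exists X, is_MP_inverse (H - lam%:M) X.
Proof.
have xKx (x : R) : x * x^-1 * x = x.
  by have [->|x0] := eqVneq x 0; [rewrite !mulr0 | rewrite mulfV // mul1r].
have xKx' (x : R) : x^-1 * x * x^-1 = x^-1.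
  by have [->|x0] := eqVneq x 0; [rewrite invr0 !mulr0 | rewrite mulVf // mul1r].
exists (Q *m diag_mx (\row_j (d 0 j - lam)^-1) *m Q^T); rewrite A_Qd.
split; rewrite ?Qd_mul ?Qd_tr //; congr (Q *m diag_mx _ *m Q^T); apply/rowP => j.
  by rewrite !mxE xKx.
by rewrite !mxE xKx'.
Qed.

Lemma xs_norm P : is_MP_inverse (H - m%:M) P ->
  (forall z : 'cV[R]_n, H *m z = m *: z -> (g0^T *m z) 0 0 = 0) ->
  [/\ (H - m%:M) *m (- (P *m g0)) = - g0,
      (forall z : 'cV[R]_n, (H - m%:M) *m z = 0 -> (- (P *m g0))^T *m z = 0) &
      ((- (P *m g0))^T *m (- (P *m g0))) 0 0 = phi c d m].
Proof.
move=> MP perp.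
have AT : (H - m%:M)^T = H - m%:M by apply: trA.
have rng : (H - m%:M) *m (P *m g0) = g0.
  by apply: MP_range => // z /kerA; apply: perp.
have ort (z : 'cV[R]_n) : (H - m%:M) *m z = 0 -> (P *m g0)^T *m z = 0 by move=> Az; apply: MP_perp MP Az.
split.
- by rewrite mulmxN rng.
- by move=> z Az; rewrite trN mulNmx ort // oppr0.
rewrite trN mulNmx mulmxN opprK.
set v := P *m g0 in rng ort *.
have uE i : (Q^T *m v) i 0 = c i 0 / (d 0 i - m).
  have : (diag_mx d - m%:M) *m (Q^T *m v) = c.
    by rewrite -[LHS]QtQ -Aq QQtv rng.
  move/matrixP => /(_ i 0); rewrite diagBcol => E.
  have [dm|dm] := eqVneq (d 0 i) m.
    rewrite dm subrr invr0 mulr0 -vcol ort ?mxE //.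
    by apply/(@kerA _ _ H); rewrite Hcol dm.
  by rewrite -E mulrC mulKf // subr_eq0.
rewrite -(QQtv v) normQ cnorm2E; apply: eq_bigr => i _.
by rewrite uE expr_div_n.
Qed.
End Spec2.

End Aux.
Import Aux.

Lemma norm_add (R : realType) n (x z : 'cV[R]_n) : x^T *m z = 0 ->
  ((x + z)^T *m (x + z)) 0 0 = (x^T *m x) 0 0 + (z^T *m z) 0 0.
Proof.
move=> xz; have zx : z^T *m x = 0 by rewrite -[LHS]trmxK trmx_mul trmxK xz trmx0.
by rewrite trD mulmxDl !mulmxDr xz zx addr0 add0r !entD.
Qed.

Lemma QEP_eig (R : realType) n (H : 'M[R]_n) g0 gam lam (z : 'cV[R]_n) :
  z != 0 -> H *m z = lam *: z -> (g0^T *m z) 0 0 = 0 -> QEP_feasible H g0 gam lam z.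
Proof.
move=> z0 /kerA Az gz; split => //.
have gw : g0^T *m z = 0 by apply/matrixP => i j; rewrite !ord1 gz mxE.
by rewrite -mulmxA Az mulmx0 -mulmxA gw mulmx0 scaler0.
Qed.

Theorem theorem2p6 (R : realType) (l : nat) (H : 'M[R]_l) (g0 : 'cV[R]_l) (gam : R)
  (lam_s : R) (w_s : 'cV[R]_l) :
  H^T = H -> g0 != 0 -> 0 < gam ->
  QEP_minimizer H g0 gam lam_s w_s ->
  ((forall lam w, QEP_minimizer H g0 gam lam w -> (g0^T *m w) 0 0 != 0) ->
     lam_s < lambda_min H /\ exists! p, LG_minimizer H g0 gam p) /\
  ((exists lam w, QEP_minimizer H g0 gam lam w /\ (g0^T *m w) 0 0 = 0) ->
     lam_s = lambda_min H /\
     ((exists! p, LG_minimizer H g0 gam p) <->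
      vnorm (- (MP_inverse (H - lam_s%:M) *m g0)) = gam)).
Proof.
move=> HT g0n gam0 [Qf_s Qmin_s].
have [Q [d [QQ HQ]]] := spectral_real HT.
have [k _] : exists k : 'I_l, g0 k 0 != 0.
  case: (pickP (fun k => g0 k 0 != 0)) => [k kk|none]; first by exists k.
  move: g0n; have -> : g0 = 0.
    by apply/matrixP => i j; rewrite ord1 mxE; move: (none i) => /= /negbFE/eqP.
  by rewrite eqxx.
case: (@arg_minP _ _ _ k xpredT (fun i => d 0 i) isT) => i0 _ i0min'.
have i0min : forall i, d 0 i0 <= d 0 i by move=> i; apply: i0min'.
set m := d 0 i0 in i0min *.
have lmE : lambda_min H = m := lminE HT QQ HQ i0min.
rewrite lmE.
pose z0 := col i0 Q.
have Hz0 : H *m z0 = m *: z0 := Hcol QQ HQ i0.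
have z0n : z0 != 0 := col_neq0 QQ i0.
have LGQ lam y : LG_feasible H g0 gam lam y -> lam_s <= lam.
  by move=> /(LG_QEP HT gam0) [w Qw]; apply: Qmin_s Qw.
have eigge := eig_ge HT QQ HQ i0min.
have eigcol := eig_col HT.
split.
  move=> hyp1.
  have ws : (g0^T *m w_s) 0 0 != 0 by apply: (hyp1 lam_s w_s); split.
  have ltm : lam_s < m.
    rewrite ltNge; apply/negP => mle.
    case: (eqVneq ((g0^T *m z0) 0 0) 0) => [gz0 | gz0].
      have Qz0 : QEP_feasible H g0 gam m z0 by apply: QEP_eig.
      have lsm : lam_s = m by apply/le_anti; rewrite mle (Qmin_s _ _ Qz0).
      have : (g0^T *m z0) 0 0 != 0.
        apply: (hyp1 m); split => // lam' w' Qf'; rewrite -lsm; exact: Qmin_s Qf'.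
      by rewrite gz0 eqxx.
    have [lam [lm [y Ly]]] := sol_a gam0 QQ HQ i0min Hz0 gz0.
    by move: (LGQ _ _ Ly); rewrite leNgt (lt_le_trans lm mle).
  split => //.
  have [y_s Ly_s] := QEP_LG HT gam0 Qf_s ws.
  exists (lam_s, y_s); split.
    by split => // lam y /LGQ.
  move=> [lam y] [Ly /= minp].
  have ll : lam = lam_s by apply/le_anti; rewrite (minp _ _ Ly_s) (LGQ _ _ Ly).
  rewrite ll in Ly *; congr pair.
  apply/eqP; rewrite eq_sym -subr_eq0; apply/negP => /negP yn.
  have : eigenvalue H lam_s.
    apply: (eigcol _ _ yn); apply/kerA.
    by rewrite mulmxBr (proj1 Ly) (proj1 Ly_s) subrr.
  by move/eigge => /(lt_le_trans ltm); rewrite ltxx.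
move=> [lam' [w' [[Qf' Qmin'] s0]]].
have ll : lam' = lam_s by apply/le_anti; rewrite (Qmin' _ _ Qf_s) (Qmin_s _ _ Qf').
have mls : m <= lam_s.
  rewrite -ll; apply: eigge; apply: (eigcol _ _ (proj1 Qf')).
  exact: (QEP_s0 HT Qf' s0).
have perp : forall z : 'cV[R]_l, H *m z = m *: z -> (g0^T *m z) 0 0 = 0.
  move=> z Hz; apply/eqP; apply/negP => /negP gz.
  have [lam [lm [y Ly]]] := sol_a gam0 QQ HQ i0min Hz gz.
  by move: (LGQ _ _ Ly); rewrite leNgt (lt_le_trans lm mls).
have Qz0 : QEP_feasible H g0 gam m z0 by apply: QEP_eig => //; apply: perp.
have lsm : lam_s = m by apply/le_anti; rewrite mls (Qmin_s _ _ Qz0).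
split => //.
rewrite lsm in LGQ *.
have MPP : is_MP_inverse (H - m%:M) (MP_inverse (H - m%:M)).
  by apply: (@xgetPex _ 0 [set X | is_MP_inverse (H - m%:M) X]); apply: (MP_ex QQ HQ).
set xs := - (MP_inverse (H - m%:M) *m g0).
have [Axs xperp xnorm] := xs_norm HT QQ HQ MPP perp.
rewrite -/xs in Axs xperp xnorm.
have Az0 : (H - m%:M) *m z0 = 0 by apply/kerA.
have z0z0 : (z0^T *m z0) 0 0 = 1.
  by rewrite vcol /z0 colE QtQ // mxE !eqxx.
have xz0 : xs^T *m z0 = 0 by apply: xperp.
have Lmin y : LG_feasible H g0 gam m y -> LG_minimizer H g0 gam (m, y).
  by move=> Ly; split => // lam' y' /LGQ.
split.
  move=> [[lam0 y0] [[Ly0 min0] uniq]].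
  apply/(vnormP gam0); rewrite xnorm.
  case: (ltgtP (phi (Q^T *m g0) d m) (gam ^+ 2)) => // [lt|gt].
    pose t := Num.sqrt (gam ^+ 2 - phi (Q^T *m g0) d m).
    have t0 : 0 < t by rewrite sqrtr_gt0 subr_gt0.
    have Lpm (s : R) : s ^+ 2 = t ^+ 2 -> LG_feasible H g0 gam m (xs + s *: z0).
      move=> st; split; first by rewrite mulmxDr Axs -scalemxAr Az0 scaler0 addr0.
      apply/(vnormP gam0); rewrite norm_add; last by rewrite -scalemxAr xz0 scaler0.
      rewrite xnorm trZ -scalemxAl -scalemxAr !entZ z0z0 mulr1 -expr2 st sqr_sqrtr.
        by rewrite addrC subrK.
      by rewrite subr_ge0 ltW.
    have e1 := uniq _ (Lmin _ (Lpm t erefl)).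
    have e2 := uniq _ (Lmin _ (Lpm (- t) (sqrrN _))).
    have : xs + t *: z0 = xs + (- t) *: z0 by move: e1 e2 => -> [].
    move/addrI/eqP; rewrite -subr_eq0 -scalerBl scaler_eq0 (negPf z0n) orbF.
    by rewrite opprK -mulr2n mulrn_eq0 /= (gt_eqF t0).
  have [lam [lm [y Ly]]] := sol_b gam0 QQ HQ (i0min) perp gt.
  by move: (LGQ _ _ Ly); rewrite leNgt lm.
move=> nx.
exists (m, xs); split.
  by apply: Lmin; split.
move=> [lam y] [Ly /= minp].
have ll2 : lam = m by apply/le_anti; rewrite (LGQ _ _ Ly) (minp m xs) //; split.
rewrite ll2 in Ly *; congr pair.
pose z := y - xs.
have yE : y = xs + z by rewrite /z addrC subrK.
have Az : (H - m%:M) *m z = 0 by rewrite /z mulmxBr (proj1 Ly) Axs subrr.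
move: Ly => [_ /(vnormP gam0)]; rewrite yE (@norm_add R l xs z (xperp _ Az)).
move/(vnormP gam0): nx => ->.
rewrite -[X in _ = X -> _]addr0 => /addrI /cnorm2_eq0 z0'.
by rewrite z0' addr0.
Qed.
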